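(* Let $(X,d,W)$ be a $W$-hyperbolic space. The following are equivalent: (1) there exists $\eta:(0,\infty)\times(0,2]\to(0,1]$ such that for all $r>0$, $\varepsilon\in(0,2]$ and $a,x,y\in X$: if $d(x,a)\le r$, $d(y,a)\le r$ and $d(x,y)\ge\varepsilon r$, then $d\big(\tfrac12x\oplus\tfrac12y,a\big)\le(1-\eta(r,\varepsilon))r$; (2) there exists $\eta:\mathbb Q^+_*\times\mathbb N\to\mathbb N$ such that for all $r\in\mathbb Q^+_*$, $k\in\mathbb N$ and $a,x,y\in X$: if $d(x,a)<r$, $d(y,a)<r$ and $d\big(\tfrac12x\oplus\tfrac12y,a\big)>\big(1-2^{-\eta(r,k)}\big)r$, then $d(x,y)\le 2^{-k}r$.
   Context: A $W$-hyperbolic space is $(X,d,W)$ with $(X,d)$ a metric space and $W:X\times X\times[0,1]\to X$ such that for all $x,y,z,w\in X$, $\lambda,\lambda_1,\lambda_2\in[0,1]$: (W1) $d(z,W(x,y,\lambda))\le(1-\lambda)d(z,x)+\lambda d(z,y)$; (W2) $d(W(x,y,\lambda_1),W(x,y,\lambda_2))=|\lambda_1-\lambda_2|d(x,y)$; (W3) $W(x,y,\lambda)=W(y,x,1-\lambda)$; (W4) $d(W(x,z,\lambda),W(y,w,\lambda))\le(1-\lambda)d(x,y)+\lambda d(z,w)$. Notation: $(1-\lambda)x\oplus\lambda y:=W(x,y,\lambda)$. $\mathbb Q^+_*$ denotes the set of positive rational numbers. *)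

(* Defs.v *)
From Stdlib Require Export Reals QArith.
Open Scope R_scope.

Definition is_metric {X : Type} (d : X -> X -> R) : Prop :=
  (forall x y, d x y = 0 <-> x = y) /\
  (forall x y, d x y = d y x) /\
  (forall x y z, d x z <= d x y + d y z).

(* (X,d,W) is a W-hyperbolic space, W(x,y,lambda) = (1-lambda)x (+) lambda y;
   values of W outside lambda in [0,1] are irrelevant. *)
Definition is_W_hyperbolic {X : Type} (d : X -> X -> R) (W : X -> X -> R -> X)
  : Prop :=
  is_metric d /\
  (forall x y z l, 0 <= l <= 1 ->
      d z (W x y l) <= (1 - l) * d z x + l * d z y) /\
  (forall x y l1 l2, 0 <= l1 <= 1 -> 0 <= l2 <= 1 ->
      d (W x y l1) (W x y l2) = Rabs (l1 - l2) * d x y) /\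
  (forall x y l, 0 <= l <= 1 -> W x y l = W y x (1 - l)) /\
  (forall x y z w l, 0 <= l <= 1 ->
      d (W x z l) (W y w l) <= (1 - l) * d x y + l * d z w).

Definition midW {X : Type} (W : X -> X -> R -> X) (x y : X) : X := W x y (1/2).

(* Main.v *)
Require Import Defs.
From Stdlib Require Import Reals QArith Qreals Lra Lia Classical ClassicalEpsilon.
Open Scope R_scope.

Lemma half_pow_bounds (k : nat) : 0 < (1/2)^k <= 1.
Proof.
  induction k as [|k IH]; simpl; lra.
Qed.

Lemma half_pow_small (y : R) : 0 < y -> exists k : nat, (1/2)^k < y.
Proof.
  intros Hy.
  assert (Habs : Rabs (1/2) < 1) by (rewrite Rabs_pos_eq; lra).
  destruct (pow_lt_1_zero (1/2) Habs y Hy) as [N HN].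
  exists N. specialize (HN N (le_n N)).
  rewrite Rabs_pos_eq in HN; [exact HN|].
  apply Rlt_le, pow_lt; lra.
Qed.

Lemma Q_dense (a b : R) : a < b -> exists q : Q, a < Q2R q < b.
Proof.
  intros H.
  destruct (archimed (/(b-a))) as [H1 H2].
  assert (Hinv : 0 < / (b-a)) by (apply Rinv_0_lt_compat; lra).
  assert (Hm: 0 < IZR (up (/(b-a)))) by lra.
  assert (Hm' : (0 < up (/(b-a)))%Z) by (apply lt_IZR; exact Hm).
  destruct (archimed (a * IZR (up (/(b-a))))) as [H3 H4].
  exists (Qmake (up (a*IZR (up (/(b-a))))) (Z.to_pos (up (/(b-a))))).
  unfold Q2R; simpl. rewrite Z2Pos.id by lia.
  set (m := IZR (up (/(b-a)))) in *.
  set (z := IZR (up (a * m))) in *.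
  assert (Hbm : 1 < (b - a) * m).
  { replace 1 with ((b-a) * / (b-a)) by (field; lra).
    apply Rmult_lt_compat_l; lra. }
  assert (Hmi : m * / m = 1) by (field; lra).
  split.
  - apply Rmult_lt_reg_r with m; [lra|].
    rewrite Rmult_assoc, Rinv_l by lra. lra.
  - apply Rmult_lt_reg_r with m; [lra|].
    rewrite Rmult_assoc, Rinv_l by lra. lra.
Qed.

Lemma Q2R_pos (r : Q) : (0 < r)%Q -> 0 < Q2R r.
Proof.
  intros H. apply Qlt_Rlt in H. unfold Q2R at 1 in H. simpl in H. lra.
Qed.

Section S.
Variables (X : Type) (d : X -> X -> R) (W : X -> X -> R -> X).
Hypothesis HW : is_W_hyperbolic d W.

Lemma d_nonneg x y : 0 <= d x y.
Proof.
  destruct HW as [[H0 [Hs Ht]] _].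
  pose proof (Ht x y x). rewrite (Hs y x) in H.
  assert (d x x = 0) by (apply H0; reflexivity). lra.
Qed.

Lemma d_refl x : d x x = 0.
Proof. destruct HW as [[H0 _] _]. apply H0; reflexivity. Qed.

Lemma dir12 (eta : R -> R -> R)
  (He1 : forall r eps, 0 < r -> 0 < eps <= 2 -> 0 < eta r eps <= 1)
  (He2 : forall r eps (a x y : X), 0 < r -> 0 < eps <= 2 ->
        d x a <= r -> d y a <= r -> d x y >= eps * r ->
        d (midW W x y) a <= (1 - eta r eps) * r) :
  exists eta : Q -> nat -> nat,
     forall (r : Q) (k : nat) (a x y : X), (0 < r)%Q ->
        d x a < Q2R r -> d y a < Q2R r ->
        d (midW W x y) a > (1 - (1/2) ^ (eta r k)) * Q2R r ->
        d x y <= (1/2) ^ k * Q2R r.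
Proof.
  assert (Hex : forall (r : Q) (k : nat), exists N : nat,
     (0 < r)%Q -> (1/2)^N <= eta (Q2R r) ((1/2)^k)).
  { intros r k. destruct (classic (0 < r)%Q) as [Hr|Hr].
    - pose proof (Q2R_pos r Hr) as Hr'.
      pose proof (half_pow_bounds k).
      destruct (He1 (Q2R r) ((1/2)^k) Hr' ltac:(lra)) as [Hp _].
      destruct (half_pow_small _ Hp) as [N HN]. exists N. intros _. lra.
    - exists 0%nat. intros H; contradiction. }
  exists (fun r k => proj1_sig (constructive_indefinite_description _ (Hex r k))).
  intros r k a x y Hr Hx Hy Hm.
  destruct (constructive_indefinite_description _ (Hex r k)) as [N HN]. simpl in Hm.
  specialize (HN Hr).
  pose proof (Q2R_pos r Hr) as Hr'.
  pose proof (half_pow_bounds k) as Hk.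
  destruct (Rle_or_lt (d x y) ((1/2)^k * Q2R r)) as [H|H]; [exact H|exfalso].
  pose proof (He2 (Q2R r) ((1/2)^k) a x y Hr' ltac:(lra) ltac:(lra) ltac:(lra) ltac:(lra)).
  assert ((1 - eta (Q2R r) ((1/2)^k)) * Q2R r <= (1 - (1/2)^N) * Q2R r)
    by (apply Rmult_le_compat_r; lra).
  lra.
Qed.

Lemma dir21 (eta : Q -> nat -> nat)
  (H2 : forall (r : Q) (k : nat) (a x y : X), (0 < r)%Q ->
        d x a < Q2R r -> d y a < Q2R r ->
        d (midW W x y) a > (1 - (1/2) ^ (eta r k)) * Q2R r ->
        d x y <= (1/2) ^ k * Q2R r) :
  exists eta : R -> R -> R,
     (forall r eps, 0 < r -> 0 < eps <= 2 -> 0 < eta r eps <= 1) /\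
     (forall r eps (a x y : X), 0 < r -> 0 < eps <= 2 ->
        d x a <= r -> d y a <= r -> d x y >= eps * r ->
        d (midW W x y) a <= (1 - eta r eps) * r).
Proof.
  assert (Hex : forall r eps, exists e, 0 < r -> 0 < eps <= 2 -> 0 < e <= 1 /\
     forall (a x y : X), d x a <= r -> d y a <= r -> d x y >= eps * r ->
        d (midW W x y) a <= (1 - e) * r).
  { intros r eps. destruct (classic (0 < r /\ 0 < eps <= 2)) as [[Hr He]|Hn];
      [| exists 1; intros; exfalso; tauto].
    destruct (Q_dense (r * (1 - eps/8)) r ltac:(nra)) as [q Hq].
    assert (Hq0 : (0 < q)%Q) by (apply Rlt_Qlt; unfold Q2R at 1; simpl; nra).
    destruct (half_pow_small (eps/4) ltac:(lra)) as [k Hk].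
    pose proof (half_pow_bounds k) as Hk'.
    set (t := (1/2)^(eta q k)).
    assert (Ht : 0 < t <= 1) by apply half_pow_bounds.
    set (s := Rmin (t * Q2R q / 2) (eps * r / 8)).
    assert (Hs1 : s <= t * Q2R q / 2) by apply Rmin_l.
    assert (Hs2 : s <= eps * r / 8) by apply Rmin_r.
    assert (Hqp : 0 < Q2R q) by nra.
    assert (Htq : 0 < t * Q2R q) by (apply Rmult_lt_0_compat; lra).
    assert (Her : 0 < eps * r) by (apply Rmult_lt_0_compat; lra).
    assert (Hs0 : 0 < s) by (apply Rmin_glb_lt; lra).
    exists (s / r). intros _ _.
    assert (Hsr : s / r * r = s) by (field; lra).
    split.
    { split; [apply Rdiv_lt_0_compat; lra|].
      apply Rmult_le_reg_r with r; [lra|]. rewrite Hsr. nra. }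
    intros a x y Hx Hy Hxy.
    destruct (Rle_or_lt (d (midW W x y) a) ((1 - s/r) * r)) as [Hc|Hc]; [exact Hc|exfalso].
    destruct HW as [[H0 [Hsym Htri]] [W1 [_ [_ W4]]]].
    set (l := (Q2R q - s) / r).
    assert (Hlr : l * r = Q2R q - s) by (unfold l; field; lra).
    assert (Hl : 0 <= l <= 1).
    { split; apply Rmult_le_reg_r with r; try lra; rewrite Hlr; nra. }
    set (x' := W a x l). set (y' := W a y l).
    assert (Hx1 : d a x' <= (1 - l) * d a a + l * d a x) by (apply W1; exact Hl).
    assert (Hy1 : d a y' <= (1 - l) * d a a + l * d a y) by (apply W1; exact Hl).
    assert (Hx2 : d x x' <= (1 - l) * d x a + l * d x x) by (apply W1; exact Hl).
    assert (Hy2 : d y y' <= (1 - l) * d y a + l * d y y) by (apply W1; exact Hl).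
    rewrite d_refl in Hx1, Hy1, Hx2, Hy2.
    rewrite (Hsym a x) in Hx1. rewrite (Hsym a y) in Hy1.
    assert (Hm : d (midW W x y) (midW W x' y') <= (1 - 1/2) * d x x' + 1/2 * d y y')
      by (apply W4; lra).
    assert (Hlx : l * d x a <= l * r) by (apply Rmult_le_compat_l; lra).
    assert (Hly : l * d y a <= l * r) by (apply Rmult_le_compat_l; lra).
    assert (Hlx' : (1-l) * d x a <= (1-l) * r) by (apply Rmult_le_compat_l; lra).
    assert (Hly' : (1-l) * d y a <= (1-l) * r) by (apply Rmult_le_compat_l; lra).
    assert (Hx'a : d x' a < Q2R q) by (rewrite Hsym; lra).
    assert (Hy'a : d y' a < Q2R q) by (rewrite Hsym; lra).
    pose proof (Htri (midW W x y) (midW W x' y') a) as T1.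
    assert (Hmid : d (midW W x' y') a > (1 - t) * Q2R q) by nra.
    pose proof (H2 q k a x' y' Hq0 Hx'a Hy'a Hmid) as Hc2.
    fold t in Hc2.
    pose proof (Htri x x' y) as T2. pose proof (Htri x' y' y) as T3.
    rewrite (Hsym y' y) in T3.
    assert ((1/2)^k * Q2R q <= eps / 4 * r) by nra.
    nra. }
  exists (fun r eps => proj1_sig (constructive_indefinite_description _ (Hex r eps))).
  split.
  - intros r eps Hr He.
    destruct (constructive_indefinite_description _ (Hex r eps)) as [e He']; simpl.
    apply (He' Hr He).
  - intros r eps a x y Hr He.
    destruct (constructive_indefinite_description _ (Hex r eps)) as [e He']; simpl.
    apply (He' Hr He).
Qed.

End S.

Theorem proposition3p8 (X : Type) (d : X -> X -> R) (W : X -> X -> R -> X)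
  (HW : is_W_hyperbolic d W) :
  (exists eta : R -> R -> R,
     (forall r eps, 0 < r -> 0 < eps <= 2 -> 0 < eta r eps <= 1) /\
     (forall r eps (a x y : X), 0 < r -> 0 < eps <= 2 ->
        d x a <= r -> d y a <= r -> d x y >= eps * r ->
        d (midW W x y) a <= (1 - eta r eps) * r))
  <->
  (exists eta : Q -> nat -> nat,
     forall (r : Q) (k : nat) (a x y : X), (0 < r)%Q ->
        d x a < Q2R r -> d y a < Q2R r ->
        d (midW W x y) a > (1 - (1/2) ^ (eta r k)) * Q2R r ->
        d x y <= (1/2) ^ k * Q2R r).
Proof.
  split.
  - intros [eta [H1 H2]]. exact (dir12 X d W eta H1 H2).
  - intros [eta H]. exact (dir21 X d W HW eta H).
Qed.
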